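(* Consider the genus 2 setting described in the context (curve $y^2=x^5+p_2x^3+p_3x^2+p_4x+p_5$, Lax operator $L$ in Tyurin parametrization with gauge $\alpha_3=(1,0)^T$, $\alpha_4=(0,1)^T$, and Hamiltonian $H$). Let $Z$ be the subvariety of the phase space defined by $$\alpha_{11}=\alpha_{22}=0,\qquad \beta_{11}=\beta_{21}=\beta_{12}=\beta_{22}=\beta_{23}=\beta_{14}=0.$$ Then $Z$ is invariant under the Hamiltonian flow of $H$: at every point of $Z$ (where defined) one has $\partial H/\partial\beta_{11}=\partial H/\partial\beta_{22}=0$ and $\partial H/\partial\alpha_{ij}=0$ for $(i,j)\in\{(1,1),(2,1),(1,2),(2,2)\}$. The restriction of $H$ to $Z$ equals $$H^{(r)}=\frac{2(\kappa_1-\kappa_4)(a_4\kappa_1-a_1\kappa_4)}{(a_1-a_4)^2}+\frac{2(\kappa_2-\kappa_3)(a_3\kappa_2-a_2\kappa_3)}{(a_2-a_3)^2},$$ and on $Z$ the Hamiltonian equations take the form $$\dot a_1=-\frac{2(a_1\kappa_4+a_4(\kappa_4-2\kappa_1))}{(a_1-a_4)^2},\quad \dot a_4=-\frac{2(a_4\kappa_1+a_1(\kappa_1-2\kappa_4))}{(a_1-a_4)^2},\quad \dot\kappa_1=\frac{\kappa_1-\kappa_4}{a_1-a_4}\dot a_1,\quad \dot\kappa_4=\frac{\kappa_1-\kappa_4}{a_1-a_4}\dot a_4,$$ $$\dot a_2=-\frac{2(a_2\kappa_3+a_3(\kappa_3-2\kappa_2))}{(a_2-a_3)^2},\quad \dot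 a_3=-\frac{2(a_3\kappa_2+a_2(\kappa_2-2\kappa_3))}{(a_2-a_3)^2},\quad \dot\kappa_2=\frac{\kappa_2-\kappa_3}{a_2-a_3}\dot a_2,\quad \dot\kappa_3=\frac{\kappa_2-\kappa_3}{a_2-a_3}\dot a_3,$$ $$\dot\alpha_{12}=\alpha_{12}\frac{b_2+b_3}{a_2-a_3}\dot a_3,\qquad \dot\alpha_{21}=\alpha_{21}\frac{b_1+b_4}{a_1-a_4}\dot a_4 .$$ In particular, the first eight equations form the Hamiltonian system with Hamiltonian $H^{(r)}$ in the canonical coordinates $(a_s,\kappa_s)_{s=1}^4$.
   Context: Let $\Sigma$ be the genus 2 hyperelliptic curve $y^2=P(x)=x^5+p_2x^3+p_3x^2+p_4x+p_5$ (i.e. the coefficient $p_1$ of $x^4$ is $0$), with $p_2,\dots,p_5\in\mathbb{C}$. Dynamical variables: points $(a_s,b_s)\in\Sigma$, $s=1,\dots,4$, with pairwise distinct $a_s$ (each $b_s$ is regarded as a local branch of $\sqrt{P(a_s)}$, hence a function of $a_s$); numbers $\kappa_1,\dots,\kappa_4$; vectors $\alpha_1=(\alpha_{11},\alpha_{21})^T$, $\alpha_2=(\alpha_{12},\alpha_{22})^T$, $\beta_1=(\beta_{11},\beta_{21})^T$, $\beta_2=(\beta_{12},\beta_{22})^T$, $\beta_3=(0,\beta_{23})^T$, $\beta_4=(\beta_{14},0)^T$, and the gauge-fixed vectors $\alpha_3=(1,0)^T$, $\alpha_4=(0,1)^T$. The Lax operator is $$L(x,y)=A_0+A_1x+\sum_{s=1}^4\alpha_s\beta_s^T\frac{y+b_s}{x-a_s},$$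 where the $2\times2$ matrices $A_0,A_1$ are determined (as rational functions of the remaining variables, for generic values) by the eight scalar linear equations $L(a_s,b_s)\alpha_s=\kappa_s\alpha_s$, $s=1,\dots,4$, in which, in $L(a_s,b_s)$, the singular summand with index $s$ is omitted. Near $x=\infty$ use the local parameter $z$ with $x=z^{-2}$, $y=z^{-5}(1+p_2z^4+p_3z^6+p_4z^8+p_5z^{10})^{1/2}$ (branch equal to $1$ at $z=0$). The Hamiltonian is $$H=-\operatorname{res}_{z=0}\, z^{-4}\,y(z)^{-1}\,\operatorname{tr}\big(L(x(z),y(z))^2\big)\,dz \;=\;\tfrac12\operatorname{res}_{z=0} z^{-1}\operatorname{tr}L^2\,\frac{dx}{y}.$$ The Hamiltonian equations are $\dot a_s=\partial H/\partial\kappa_s$, $\dot\kappa_s=-\partial H/\partial a_s$ ($s=1,\dots,4$, with $b_s$ differentiated as a function of $a_s$), $\dot\alpha_{ij}=\partial H/\partial\beta_{ij}$, $\dot\beta_{ij}=-\partial H/\partial\alpha_{ij}$ for $(i,j)\in\{(1,1),(2,1),(1,2),(2,2)\}$, and $\dot\beta_{23}=\dot\beta_{14}=0$ (their conjugate variables are fixed by the gauge and $H$ does not depend on them). *)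

(* Defs.v *)
From HB Require Import structures.
From mathcomp Require Import all_boot all_order all_algebra.
Set Implicit Arguments. Unset Strict Implicit. Unset Printing Implicit Defensive.
Import Order.TTheory GRing.Theory Num.Theory.
Local Open Scope ring_scope.

(* Dual numbers F[eps]/(eps^2), used to express first-order (partial) derivatives
   algebraically: for a function given by field operations, f(x + eps v) = f(x) + eps (Df(x) v). *)
Definition dual (F : fieldType) : Type := (F * F)%type.

Section Dual.
Variable F : fieldType.
HB.instance Definition _ := GRing.Zmodule.on (dual F).

Definition dre (x : dual F) : F := x.1.
Definition dep (x : dual F) : F := x.2.
Definition dmk (r e : F) : dual F := (r, e).
Definition done_ : dual F := (1, 0).
Definition dmul (x y : dual F) : dual F := (x.1 * y.1, x.1 * y.2 + x.2 * y.1).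

Lemma dmulA : associative dmul.
Proof.
move=> [a b] [c d] [e f]; rewrite /dmul /=; congr pair; first by rewrite mulrA.
by rewrite !mulrDr !mulrDl !mulrA addrA.
Qed.
Lemma dmulC : commutative dmul.
Proof. by move=> [a b] [c d]; rewrite /dmul /= [c * a]mulrC [c * b]mulrC [d * a]mulrC addrC. Qed.
Lemma dmul1 : left_id done_ dmul.
Proof. by move=> [a b]; rewrite /dmul /= !mul1r mul0r addr0. Qed.
Lemma dmulDl : left_distributive dmul +%R.
Proof.
move=> [a b] [c d] [e f]; rewrite /dmul /=; congr pair; first by rewrite mulrDl.
by rewrite !mulrDl addrACA.
Qed.
Lemma done_neq0 : done_ != 0.
Proof. by apply/negP => /eqP [] /eqP; rewrite oner_eq0. Qed.

HB.instance Definition _ := GRing.Zmodule_isComNzRing.Build (dual F)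
  dmulA dmulC dmul1 dmulDl done_neq0.

Definition dunit : {pred dual F} := fun x => x.1 != 0.
Definition dinv (x : dual F) : dual F :=
  if x.1 == 0 then x else (x.1^-1, - (x.2 / x.1 ^+ 2)).
Lemma dmulVx : {in dunit, left_inverse 1 dinv *%R}.
Proof.
move=> [a b]; rewrite /dunit /dinv /= => a0; rewrite (negbTE a0).
rewrite /GRing.mul /= /dmul /=; congr pair; first by rewrite mulVf.
by rewrite mulNr expr2 invfM -!mulrA mulVf // mulr1 mulrC subrr.
Qed.
Lemma dunitPl : forall x y : dual F, y * x = 1 -> dunit x.
Proof.
move=> [a b] [c d] /(congr1 fst) /= H; rewrite /dunit /=; apply/eqP => a0.
by move: H; rewrite a0 mulr0 => /eqP; rewrite eq_sym oner_eq0.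
Qed.
Lemma dinv_out : {in [predC dunit], dinv =1 id}.
Proof. by move=> [a b]; rewrite inE /dunit /dinv /= negbK => ->. Qed.

HB.instance Definition _ := GRing.ComNzRing_hasMulInverse.Build (dual F)
  dmulVx dunitPl dinv_out.
End Dual.

(* Phase space of the genus-2 system (Tyurin parametrization, gauge
   alpha_3 = (1,0)^T, alpha_4 = (0,1)^T, beta_3 = (0,beta_23)^T, beta_4 = (beta_14,0)^T). *)
Record phase (R : Type) := Phase {
  a1 : R; a2 : R; a3 : R; a4 : R;
  b1 : R; b2 : R; b3 : R; b4 : R;          (* y-coordinates b_s (branches of sqrt P(a_s)) *)
  k1 : R; k2 : R; k3 : R; k4 : R;
  al11 : R; al21 : R; al12 : R; al22 : R;  (* alpha_1 = (al11,al21)^T, alpha_2 = (al12,al22)^T *)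
  be11 : R; be21 : R; be12 : R; be22 : R;  (* beta_1 = (be11,be21)^T, beta_2 = (be12,be22)^T *)
  be23 : R; be14 : R                       (* beta_3 = (0,be23)^T, beta_4 = (be14,0)^T *)
}.

Section Lax.
Variable R : comUnitRingType.
Implicit Types (P : phase R).

Definition v2 (x y : R) : 'cV[R]_2 := \col_(i < 2) nth 0 [:: x; y] i.

(* indices s = 1,2,3,4 of the paper correspond to s = 0,1,2,3 : 'I_4 here *)
Definition aa P (s : 'I_4) : R := nth 0 [:: a1 P; a2 P; a3 P; a4 P] s.
Definition bb P (s : 'I_4) : R := nth 0 [:: b1 P; b2 P; b3 P; b4 P] s.
Definition kk P (s : 'I_4) : R := nth 0 [:: k1 P; k2 P; k3 P; k4 P] s.
Definition alpha P (s : 'I_4) : 'cV[R]_2 :=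
  nth 0 [:: v2 (al11 P) (al21 P); v2 (al12 P) (al22 P); v2 1 0; v2 0 1] s.
Definition beta P (s : 'I_4) : 'cV[R]_2 :=
  nth 0 [:: v2 (be11 P) (be21 P); v2 (be12 P) (be22 P); v2 0 (be23 P); v2 (be14 P) 0] s.

(* The singular part of L(a_s,b_s) with the s-th summand omitted:
   sum_{t <> s} alpha_t beta_t^T (b_s + b_t)/(a_s - a_t). *)
Definition Lsing P (s : 'I_4) : 'M[R]_2 :=
  \sum_(t < 4 | t != s) ((bb P s + bb P t) / (aa P s - aa P t)) *: (alpha P t *m (beta P t)^T).

(* The eight scalar equations (A0 + a_s A1 + Lsing s) alpha_s = kappa_s alpha_s,
   transposed, read  alpha_s^T A0^T + a_s alpha_s^T A1^T = (kappa_s alpha_s - Lsing s alpha_s)^T,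
   i.e. W *m Y = RHS with unknown Y = col_mx A0^T A1^T. *)
Definition Wmx P : 'M[R]_(4, 2 + 2) :=
  \matrix_(s < 4) row_mx (alpha P s)^T (aa P s *: (alpha P s)^T).
Definition RHSmx P : 'M[R]_(4, 2) :=
  \matrix_(s < 4) (kk P s *: alpha P s - Lsing P s *m alpha P s)^T.
Definition Ysol P : 'M[R]_(2 + 2, 2) := invmx (Wmx P) *m RHSmx P.
Definition A0 P : 'M[R]_2 := (usubmx (Ysol P))^T.
Definition A1 P : 'M[R]_2 := (dsubmx (Ysol P))^T.

Definition Lat P (s : 'I_4) : 'M[R]_2 := A0 P + aa P s *: A1 P + Lsing P s.

(* Laurent expansion at infinity, x = z^-2, y = z^-5 (1 + p2 z^4 + ...)^(1/2):
   (y+b_s)/(x-a_s) = z^-3 + a_s z^-1 + (a_s^2 + p2/2) z + O(z^2), hence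
   L = Lc(-3) z^-3 + Lc(-2) z^-2 + Lc(-1) z^-1 + Lc(0) + Lc(1) z + O(z^2) with *)
Definition Bk P (k : nat) : 'M[R]_2 := \sum_(s < 4) (aa P s ^+ k) *: (alpha P s *m (beta P s)^T).
Definition Lm3 P := Bk P 0.
Definition Lm2 P := A1 P.
Definition Lm1 P := Bk P 1.
Definition L0 P := A0 P.
Definition L1 (p2 : R) P := Bk P 2 + (p2 / 2%:R) *: Bk P 0.

(* H = -res_{z=0} z^-4 y(z)^-1 tr(L^2) dz = - [z^-2] ( tr(L^2) * (1 + p2 z^4 + ...)^(-1/2) )
     = - ( [z^-2] tr L^2  - (p2/2) [z^-6] tr L^2 ). *)
Definition Ham (p2 : R) P : R :=
  - ( (\tr (Lm3 P *m L1 p2 P) + \tr (L1 p2 P *m Lm3 P)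
       + \tr (Lm2 P *m L0 P) + \tr (L0 P *m Lm2 P) + \tr (Lm1 P *m Lm1 P))
      - (p2 / 2%:R) * \tr (Lm3 P *m Lm3 P) ).

Definition Hred P : R :=
  2%:R * (k1 P - k4 P) * (a4 P * k1 P - a1 P * k4 P) / (a1 P - a4 P) ^+ 2
  + 2%:R * (k2 P - k3 P) * (a3 P * k2 P - a2 P * k3 P) / (a2 P - a3 P) ^+ 2.
End Lax.

Section Deriv.
Variable F : fieldType.

Definition Pcurve (p2 p3 p4 p5 : F) : {poly F} :=
  'X^5 + p2 *: 'X^3 + p3 *: 'X^2 + p4 *: 'X + p5%:P.

(* derivative of the branch b(a) = sqrt(P(a)) at a point (a,b) of the curve:
   db/da = P'(a) / (2 b) *)
Definition dbda (p2 p3 p4 p5 : F) (a b : F) : F := (Pcurve p2 p3 p4 p5)^`().[a] / (2%:R * b).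

Inductive var := va1 | va2 | va3 | va4 | vk1 | vk2 | vk3 | vk4
  | val11 | val21 | val12 | val22 | vbe11 | vbe21 | vbe12 | vbe22.
Scheme Equality for var.

(* tangent vector of the coordinate x at the point v: the coordinate x moves with
   unit speed, all other coordinates are fixed, except that b_s moves with a_s *)
Definition dir (p2 p3 p4 p5 : F) (x : var) (v : phase F) : phase F :=
  let e y := if var_beq x y then 1 else 0 in
  Phase (e va1) (e va2) (e va3) (e va4)
    (if x is va1 then dbda p2 p3 p4 p5 (a1 v) (b1 v) else 0)
    (if x is va2 then dbda p2 p3 p4 p5 (a2 v) (b2 v) else 0)
    (if x is va3 then dbda p2 p3 p4 p5 (a3 v) (b3 v) else 0)
    (if x is va4 then dbda p2 p3 p4 p5 (a4 v) (b4 v) else 0)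
    (e vk1) (e vk2) (e vk3) (e vk4)
    (e val11) (e val21) (e val12) (e val22)
    (e vbe11) (e vbe21) (e vbe12) (e vbe22) 0 0.

Definition dlift (v dv : phase F) : phase (dual F) :=
  Phase (a1 v, a1 dv) (a2 v, a2 dv) (a3 v, a3 dv) (a4 v, a4 dv)
        (b1 v, b1 dv) (b2 v, b2 dv) (b3 v, b3 dv) (b4 v, b4 dv)
        (k1 v, k1 dv) (k2 v, k2 dv) (k3 v, k3 dv) (k4 v, k4 dv)
        (al11 v, al11 dv) (al21 v, al21 dv) (al12 v, al12 dv) (al22 v, al22 dv)
        (be11 v, be11 dv) (be21 v, be21 dv) (be12 v, be12 dv) (be22 v, be22 dv)
        (be23 v, be23 dv) (be14 v, be14 dv).

Definition dHam (p2 p3 p4 p5 : F) (x : var) (v : phase F) : F :=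
  (Ham ((p2, 0) : dual F) (dlift v (dir p2 p3 p4 p5 x v))).2.
Definition dHred (p2 p3 p4 p5 : F) (x : var) (v : phase F) : F :=
  (Hred (dlift v (dir p2 p3 p4 p5 x v))).2.
End Deriv.

(* Main.v *)
Require Import Defs.
From HB Require Import structures.
From mathcomp Require Import all_boot all_order all_algebra.
From mathcomp Require Import ring.
Import Order.TTheory GRing.Theory Num.Theory.
Local Open Scope ring_scope.

Section DualLemmas.
Variable F : fieldType.
Implicit Types x y : dual F.

Lemma dre_zmod : zmod_morphism (@dre F).
Proof. by move=> [a b] [c d]. Qed.
HB.instance Definition _ := GRing.isZmodMorphism.Build (dual F) F (@dre F) dre_zmod.
Lemma dre_monoid : monoid_morphism (@dre F).
Proof. by split=> // [[a b] [c d]]. Qed.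
HB.instance Definition _ := GRing.isMonoidMorphism.Build (dual F) F (@dre F) dre_monoid.

Lemma dD1 x y : (x + y).1 = x.1 + y.1. Proof. by []. Qed.
Lemma dD2 x y : (x + y).2 = x.2 + y.2. Proof. by []. Qed.
Lemma dN1 x : (- x).1 = - x.1. Proof. by []. Qed.
Lemma dN2 x : (- x).2 = - x.2. Proof. by []. Qed.
Lemma dM1 x y : (x * y).1 = x.1 * y.1. Proof. by []. Qed.
Lemma dM2 x y : (x * y).2 = x.1 * y.2 + x.2 * y.1. Proof. by []. Qed.
Lemma dz1 : (0 : dual F).1 = 0. Proof. by []. Qed.
Lemma dz2 : (0 : dual F).2 = 0. Proof. by []. Qed.
Lemma do1 : (1 : dual F).1 = 1. Proof. by []. Qed.
Lemma do2 : (1 : dual F).2 = 0. Proof. by []. Qed.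
Lemma dinvE x : x^-1 = dinv x. Proof. by []. Qed.
Lemma dV1 x : (x^-1).1 = x.1^-1.
Proof. case: x => a b; rewrite dinvE /dinv /=; case: eqP => [->|] //=; by rewrite invr0. Qed.
Lemma dV2 x : x.1 != 0 -> (x^-1).2 = - (x.2 / x.1 ^+ 2).
Proof. case: x => a b /= /negbTE; rewrite dinvE /dinv /= => -> //. Qed.
Lemma dn1 n : (n%:R : dual F).1 = n%:R.
Proof. by elim: n => // n IH; rewrite !mulrS dD1 IH. Qed.
Lemma dn2 n : (n%:R : dual F).2 = 0.
Proof. by elim: n => // n IH; rewrite !mulrS dD2 IH add0r. Qed.
Lemma dX1 x n : (x ^+ n).1 = x.1 ^+ n.
Proof. exact: (rmorphXn (@dre F)). Qed.
Lemma dX2 x : (x ^+ 2).2 = 2%:R * x.1 * x.2.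
Proof. rewrite expr2 dM2; ring. Qed.
Lemma dunitE x : (x \is a GRing.unit) = (x.1 != 0).
Proof. by []. Qed.
End DualLemmas.
Section DP.
Variable F : fieldType.
Lemma dpD (a b c d : F) : ((a, b) : dual F) + (c, d) = (a + c, b + d). Proof. by []. Qed.
Lemma dpB (a b c d : F) : ((a, b) : dual F) - (c, d) = (a - c, b - d). Proof. by []. Qed.
Lemma dpN (a b : F) : - ((a, b) : dual F) = (- a, - b). Proof. by []. Qed.
Lemma dpM (a b c d : F) : ((a, b) : dual F) * (c, d) = (a * c, a * d + b * c). Proof. by []. Qed.
Lemma dpV (a b : F) : a != 0 -> ((a, b) : dual F)^-1 = (a^-1, - (b / a ^+ 2)).
Proof. by move=> /negbTE H; rewrite dinvE /dinv /= H. Qed.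
Lemma dp0 : (0 : dual F) = (0, 0). Proof. by []. Qed.
Lemma dp1 : (1 : dual F) = (1, 0). Proof. by []. Qed.
End DP.
Lemma dinvB (F : fieldType) (a b c d : F) : a != c -> (((a, b) : dual F) - (c, d))^-1 = ((a - c)^-1, - ((b - d) / (a - c) ^+ 2)).
Proof. by rewrite -subr_eq0 => H; rewrite dpB dpV. Qed.
Lemma pair_congr (A B : Type) (a c : A) (b d : B) : a = c -> b = d -> (a, b) = (c, d).
Proof. by move=> -> ->. Qed.
Lemma dpn (F : fieldType) n : (n%:R : dual F) = (n%:R, 0).
Proof. by rewrite [LHS]surjective_pairing dn1 dn2. Qed.
Lemma dpVs (F : fieldType) (a b : F) : a != 0 -> ((a, b) : dual F)^-1 = (a^-1, - (b / a ^+ 2)).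
Proof. by move=> /negbTE H; rewrite dinvE /dinv /= H. Qed.

Section Gen.
Variable R : comUnitRingType.
Lemma sum4 (V : zmodType) (f : 'I_4 -> V) : \sum_(i < 4) f i =
  f (@Ordinal 4 0 isT) + f (@Ordinal 4 1 isT) + f (@Ordinal 4 2 isT) + f (@Ordinal 4 3 isT).
Proof.
rewrite !big_ord_recl big_ord0 addr0 !addrA; congr (_ + _ + _ + _); congr f; exact: val_inj.
Qed.
Lemma sum2 (V : zmodType) (f : 'I_2 -> V) : \sum_(i < 2) f i = f (@Ordinal 2 0 isT) + f (@Ordinal 2 1 isT).
Proof.
rewrite !big_ord_recl big_ord0 addr0; congr (_ + _); congr f; exact: val_inj.
Qed.
Lemma sum4c (f : 'I_4 -> 'M[R]_2) s : \sum_(t < 4 | t != s) f t = \sum_(t < 4) (if t != s then f t else 0).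
Proof. by rewrite big_mkcond. Qed.

End Gen.


Lemma ord4P (Q : 'I_4 -> Prop) : Q (@Ordinal 4 0 isT) -> Q (@Ordinal 4 1 isT) -> Q (@Ordinal 4 2 isT) -> Q (@Ordinal 4 3 isT) -> forall i, Q i.
Proof.
move=> H0 H1 H2 H3 [[|[|[|[|i]]]] Hi] //.
- by rewrite (bool_irrelevance Hi isT).
- by rewrite (bool_irrelevance Hi isT).
- by rewrite (bool_irrelevance Hi isT).
- by rewrite (bool_irrelevance Hi isT).
Qed.
Lemma ord2P (Q : 'I_2 -> Prop) : Q (@Ordinal 2 0 isT) -> Q (@Ordinal 2 1 isT) -> forall i, Q i.
Proof.
move=> H0 H1 [[|[|i]] Hi] //.
- by rewrite (bool_irrelevance Hi isT).
- by rewrite (bool_irrelevance Hi isT).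
Qed.

Set Implicit Arguments. Unset Strict Implicit. Unset Printing Implicit Defensive.

Definition mx2 (R : zmodType) (a b c d : R) : 'M[R]_2 :=
  \matrix_(i<2,j<2) nth 0 (nth [::] [:: [:: a; b]; [:: c; d]] i) j.
Definition WL (R : comUnitRingType) (P : phase R) : 'M[R]_(4,2) := \matrix_(s<4, j<2) alpha P s j 0.
Definition WR (R : comUnitRingType) (P : phase R) : 'M[R]_(4,2) := \matrix_(s<4, j<2) (aa P s * alpha P s j 0).


Lemma Wmx_split (R : comUnitRingType) (P : phase R) : Wmx P = row_mx (WL P) (WR P).
Proof.
apply/matrixP => i j; rewrite !mxE; case: splitP => k _; rewrite !mxE //.
Qed.

Lemma genE (R : comUnitRingType) (P : phase R) (a b c d e f g h : R) :
 (al11 P * a + al21 P * c + (a1 P * al11 P * e + a1 P * al21 P * g) = k1 P * al11 P - ((b1 P + b2 P) / (a1 P - a2 P) * (al12 P * be12 P) * al11 P + ((b1 P + b2 P) / (a1 P - a2 P) * (al12 P * be22 P) + (b1 P + b3 P) / (a1 P - a3 P) * be23 P) * al21 P)) ->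
 (al11 P * b + al21 P * d + (a1 P * al11 P * f + a1 P * al21 P * h) = k1 P * al21 P - (((b1 P + b2 P) / (a1 P - a2 P) * (al22 P * be12 P) + (b1 P + b4 P) / (a1 P - a4 P) * be14 P) * al11 P + (b1 P + b2 P) / (a1 P - a2 P) * (al22 P * be22 P) * al21 P)) ->
 (al12 P * a + al22 P * c + (a2 P * al12 P * e + a2 P * al22 P * g) = k2 P * al12 P - ((b2 P + b1 P) / (a2 P - a1 P) * (al11 P * be11 P) * al12 P + ((b2 P + b1 P) / (a2 P - a1 P) * (al11 P * be21 P) + (b2 P + b3 P) / (a2 P - a3 P) * be23 P) * al22 P)) ->
 (al12 P * b + al22 P * d + (a2 P * al12 P * f + a2 P * al22 P * h) = k2 P * al22 P - (((b2 P + b1 P) / (a2 P - a1 P) * (al21 P * be11 P) + (b2 P + b4 P) / (a2 P - a4 P) * be14 P) * al12 P + (b2 P + b1 P) / (a2 P - a1 P) * (al21 P * be21 P) * al22 P)) ->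
 (a + a3 P * e = k3 P - ((b3 P + b1 P) / (a3 P - a1 P) * (al11 P * be11 P) + (b3 P + b2 P) / (a3 P - a2 P) * (al12 P * be12 P))) ->
 (b + a3 P * f = - ((b3 P + b1 P) / (a3 P - a1 P) * (al21 P * be11 P) + (b3 P + b2 P) / (a3 P - a2 P) * (al22 P * be12 P) + (b3 P + b4 P) / (a3 P - a4 P) * be14 P)) ->
 (c + a4 P * g = - ((b4 P + b1 P) / (a4 P - a1 P) * (al11 P * be21 P) + (b4 P + b2 P) / (a4 P - a2 P) * (al12 P * be22 P) + (b4 P + b3 P) / (a4 P - a3 P) * be23 P)) ->
 (d + a4 P * h = k4 P - ((b4 P + b1 P) / (a4 P - a1 P) * (al21 P * be21 P) + (b4 P + b2 P) / (a4 P - a2 P) * (al22 P * be22 P))) ->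
  WL P *m mx2 a b c d + WR P *m mx2 e f g h = RHSmx P.
Proof.
move=> H1 H2 H3 H4 H5 H6 H7 H8.
apply/matrixP => i j.
elim/ord4P: i; elim/ord2P: j; rewrite /RHSmx [in RHS]mxE /Lsing sum4c sum4 /WL /WR /mx2;
unfold aa, bb, kk, alpha, beta, v2; do 5 (rewrite ?big_ord1 ?mxE ?sum2 //=).
all: rewrite ?(mul0r, mulr0, mul1r, mulr1, add0r, addr0).
all: assumption.
Qed.

Lemma genY (R : comUnitRingType) (P : phase R) (a b c d e f g h : R) :
  Wmx P \in unitmx ->
  WL P *m mx2 a b c d + WR P *m mx2 e f g h = RHSmx P ->
  A0 P = (mx2 a b c d)^T /\ A1 P = (mx2 e f g h)^T.
Proof.
move=> U E.
have HY : Ysol P = col_mx (mx2 a b c d) (mx2 e f g h).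
  by rewrite /Ysol -E -mul_row_col -Wmx_split mulKmx.
by rewrite /A0 /A1 HY col_mxKu col_mxKd.
Qed.

Lemma tr2E (R : comUnitRingType) (a b c d e f g h : R) :
  \tr ((mx2 e f g h)^T *m (mx2 a b c d)^T) + \tr ((mx2 a b c d)^T *m (mx2 e f g h)^T)
  = 2%:R * (a * e + b * g + c * f + d * h).
Proof.
rewrite /mxtrace !sum2 !mxE !sum2 !mxE /=; ring.
Qed.

Lemma HamS (R : comUnitRingType) (p2 : R) (P : phase R) (a b c d e f g h : R) :
  A0 P = (mx2 a b c d)^T -> A1 P = (mx2 e f g h)^T ->
  Ham p2 P = - (\tr (Lm3 P *m L1 p2 P) + \tr (L1 p2 P *m Lm3 P)
       + 2%:R * (a * e + b * g + c * f + d * h) + \tr (Lm1 P *m Lm1 P)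
      - (p2 / 2%:R) * \tr (Lm3 P *m Lm3 P)).
Proof.
move=> HA0 HA1; rewrite /Ham /Lm2 /L0 HA0 HA1 -tr2E.
by rewrite !addrA.
Qed.

Section BkG.
Variable R : comUnitRingType.
Implicit Types P : phase R.
Definition bk00 P k := a1 P ^+ k * al11 P * be11 P + a2 P ^+ k * al12 P * be12 P.
Definition bk01 P k := a1 P ^+ k * al11 P * be21 P + a2 P ^+ k * al12 P * be22 P + a3 P ^+ k * be23 P.
Definition bk10 P k := a1 P ^+ k * al21 P * be11 P + a2 P ^+ k * al22 P * be12 P + a4 P ^+ k * be14 P.
Definition bk11 P k := a1 P ^+ k * al21 P * be21 P + a2 P ^+ k * al22 P * be22 P.

Lemma BkE P k : Bk P k = mx2 (bk00 P k) (bk01 P k) (bk10 P k) (bk11 P k).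
Proof.
apply/matrixP => i j; rewrite /Bk sum4.
elim/ord2P: i; elim/ord2P: j; rewrite /mx2 /bk00 /bk01 /bk10 /bk11;
unfold aa, alpha, beta, v2; do 4 (rewrite ?big_ord1 ?mxE //=).
all: ring.
Qed.

Lemma mx2D (a b c d e f g h : R) : mx2 a b c d + mx2 e f g h = mx2 (a + e) (b + f) (c + g) (d + h).
Proof. by apply/matrixP => i j; elim/ord2P: i; elim/ord2P: j; rewrite !mxE. Qed.
Lemma mx2Z (k a b c d : R) : k *: mx2 a b c d = mx2 (k * a) (k * b) (k * c) (k * d).
Proof. by apply/matrixP => i j; elim/ord2P: i; elim/ord2P: j; rewrite !mxE. Qed.
Definition tr2 (a b c d e f g h : R) := a * e + b * g + c * f + d * h.
Lemma trM2 (a b c d e f g h : R) : \tr (mx2 a b c d *m mx2 e f g h) = tr2 a b c d e f g h.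
Proof. by rewrite /mxtrace !sum2 !mxE !sum2 !mxE /= /tr2; ring. Qed.

Lemma HamF (p2 : R) P (a b c d e f g h : R) :
  A0 P = (mx2 a b c d)^T -> A1 P = (mx2 e f g h)^T ->
  let c2 := p2 / 2%:R in
  let l00 := bk00 P 2 + c2 * bk00 P 0 in
  let l01 := bk01 P 2 + c2 * bk01 P 0 in
  let l10 := bk10 P 2 + c2 * bk10 P 0 in
  let l11 := bk11 P 2 + c2 * bk11 P 0 in
  Ham p2 P = - (tr2 (bk00 P 0) (bk01 P 0) (bk10 P 0) (bk11 P 0) l00 l01 l10 l11
     + tr2 l00 l01 l10 l11 (bk00 P 0) (bk01 P 0) (bk10 P 0) (bk11 P 0)
     + 2%:R * (a * e + b * g + c * f + d * h)
     + tr2 (bk00 P 1) (bk01 P 1) (bk10 P 1) (bk11 P 1) (bk00 P 1) (bk01 P 1) (bk10 P 1) (bk11 P 1)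
     - c2 * tr2 (bk00 P 0) (bk01 P 0) (bk10 P 0) (bk11 P 0) (bk00 P 0) (bk01 P 0) (bk10 P 0) (bk11 P 0)).
Proof.
move=> HA0 HA1 /=; rewrite (HamS p2 HA0 HA1) /Lm3 /Lm1 /L1 !BkE mx2Z mx2D !trM2 //.
Qed.
End BkG.

Definition mx24 (R : zmodType) (r1 r2 : seq R) : 'M[R]_(2,4) :=
  \matrix_(i<2,j<4) nth 0 (nth [::] [:: r1; r2] i) j.

Lemma unitR (F : fieldType) (v : phase F) :
  al11 v = 0 -> al22 v = 0 -> al12 v != 0 -> al21 v != 0 ->
  a1 v != a4 v -> a2 v != a3 v -> Wmx v \in unitmx.
Proof.
move=> h11 h22 hp hq n14 n23.
set x1 := a1 v; set x2 := a2 v; set x3 := a3 v; set x4 := a4 v; set p := al12 v; set q := al21 v.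
pose V1 := mx24 [:: 0; x3 / (p * (x3 - x2)); - x2 / (x3 - x2); 0]
                [:: x4 / (q * (x4 - x1)); 0; 0; - x1 / (x4 - x1)].
pose V2 := mx24 [:: 0; - 1 / (p * (x3 - x2)); 1 / (x3 - x2); 0]
                [:: - 1 / (q * (x4 - x1)); 0; 0; 1 / (x4 - x1)].
have H : Wmx v *m col_mx V1 V2 = 1%:M.
{  have n41 : x4 - x1 != 0 by rewrite subr_eq0 eq_sym.
  have n32 : x3 - x2 != 0 by rewrite subr_eq0 eq_sym.
  rewrite Wmx_split mul_row_col.
  apply/matrixP => i j.
  elim/ord4P: i; elim/ord4P: j; rewrite /WL /WR /V1 /V2 /mx24;
  unfold aa, bb, kk, alpha, beta, v2; do 5 (rewrite ?big_ord1 ?mxE ?sum2 //=).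
  all: rewrite ?h11 ?h22 -/x1 -/x2 -/x3 -/x4 -/p -/q.
  all: by field; rewrite ?hp ?hq ?n41 ?n32. }
by case/mulmx1_unit: H.
Qed.

Lemma HamReal (F : fieldType) (p2 : F) (v : phase F) :
  al11 v = 0 -> al22 v = 0 -> al12 v != 0 -> al21 v != 0 ->
  be11 v = 0 -> be21 v = 0 -> be12 v = 0 -> be22 v = 0 -> be23 v = 0 -> be14 v = 0 ->
  a1 v != a2 v -> a1 v != a3 v -> a1 v != a4 v ->
  a2 v != a3 v -> a2 v != a4 v -> a3 v != a4 v -> (2%:R : F) != 0 ->
  Ham p2 v = Hred v.
Proof.
move=> h11 h22 hp hq z1 z2 z3 z4 z5 z6 n12 n13 n14 n23 n24 n34 h2.
have U := unitR h11 h22 hp hq n14 n23.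
set c1 := (k2 v - k3 v) / (a2 v - a3 v).
set c2 := (k1 v - k4 v) / (a1 v - a4 v).
have n41 : a1 v - a4 v != 0 by rewrite subr_eq0.
have n32 : a2 v - a3 v != 0 by rewrite subr_eq0.
have n21 : a2 v != a1 v by rewrite eq_sym.
have n31 : a3 v != a1 v by rewrite eq_sym.
have n41' : a4 v != a1 v by rewrite eq_sym.
have n32' : a3 v != a2 v by rewrite eq_sym.
have n42 : a4 v != a2 v by rewrite eq_sym.
have n43 : a4 v != a3 v by rewrite eq_sym.
have E : WL v *m mx2 (k3 v - a3 v * c1) 0 0 (k4 v - a4 v * c2) + WR v *m mx2 c1 0 0 c2 = RHSmx v.
  apply: genE; rewrite ?h11 ?h22 ?z1 ?z2 ?z3 ?z4 ?z5 ?z6 /c1 /c2;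
  by field; rewrite ?hp ?hq !subr_eq0 ?n12 ?n13 ?n14 ?n23 ?n24 ?n34 ?n21 ?n31 ?n41' ?n32' ?n42 ?n43.
have [HA0 HA1] := genY U E.
rewrite (HamF _ HA0 HA1) /bk00 /bk01 /bk10 /bk11 /tr2 ?h11 ?h22 ?z1 ?z2 ?z3 ?z4 ?z5 ?z6 /Hred /c1 /c2.
by field; rewrite ?n41 ?n32 ?h2.
Qed.

Lemma dual_eq (F : fieldType) (x y : dual F) : x.1 = y.1 -> x.2 = y.2 -> x = y.
Proof. by case: x y => [a b] [c d] /= -> ->. Qed.

Section D.
Variable F : fieldType.
Variables (x1 x2 x3 x4 y1 y2 y3 y4 l1 l2 l3 l4 p q : F).
Variables (dx1 dx2 dx3 dx4 dy1 dy2 dy3 dy4 dl1 dl2 dl3 dl4 da11 da21 da12 da22 db11 db21 db12 db22 : F).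
Hypotheses (n12 : x1 != x2) (n13 : x1 != x3) (n14 : x1 != x4) (n23 : x2 != x3) (n24 : x2 != x4) (n34 : x3 != x4) (hp : p != 0) (hq : q != 0).
Let n21 : x2 != x1. Proof. by rewrite eq_sym. Qed.
Let n31 : x3 != x1. Proof. by rewrite eq_sym. Qed.
Let n41 : x4 != x1. Proof. by rewrite eq_sym. Qed.
Let n32 : x3 != x2. Proof. by rewrite eq_sym. Qed.
Let n42 : x4 != x2. Proof. by rewrite eq_sym. Qed.
Let n43 : x4 != x3. Proof. by rewrite eq_sym. Qed.
Variable P : phase (dual F).
Hypotheses (e1 : a1 P = (x1,dx1)) (e2 : a2 P = (x2,dx2)) (e3 : a3 P = (x3,dx3)) (e4 : a4 P = (x4,dx4))
 (e5 : b1 P = (y1,dy1)) (e6 : b2 P = (y2,dy2)) (e7 : b3 P = (y3,dy3)) (e8 : b4 P = (y4,dy4))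
 (e9 : k1 P = (l1,dl1)) (e10 : k2 P = (l2,dl2)) (e11 : k3 P = (l3,dl3)) (e12 : k4 P = (l4,dl4))
 (e13 : al11 P = (0,da11)) (e14 : al21 P = (q,da21)) (e15 : al12 P = (p,da12)) (e16 : al22 P = (0,da22))
 (e17 : be11 P = (0,db11)) (e18 : be21 P = (0,db21)) (e19 : be12 P = (0,db12)) (e20 : be22 P = (0,db22))
 (e21 : be23 P = 0) (e22 : be14 P = 0).

Let w s t := (nth 0 [:: y1; y2; y3; y4] s + nth 0 [:: y1; y2; y3; y4] t) / (nth 0 [:: x1; x2; x3; x4] s - nth 0 [:: x1; x2; x3; x4] t).
Definition c1 := (l2 - l3) / (x2 - x3).
Definition d01 := l3 - x3 * c1.
Definition c2 := (l1 - l4) / (x1 - x4).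
Definition d02 := l4 - x4 * c2.
Definition r3a := dl3 - dx3 * c1 - (y3 + y2) / (x3 - x2) * p * db12.
Definition r3b := - ((y3 + y1) / (x3 - x1) * q * db11).
Definition r2a := p * dl2 - p * c1 * dx2.
Definition r2b := (l2 - d02 - x2 * c2) * da22 - (y2 + y1) / (x2 - x1) * q * p * db11.
Definition E1a := (r2a / p - r3a) / (x2 - x3).
Definition E1b := (r2b / p - r3b) / (x2 - x3).
Definition F1a := r3a - x3 * E1a.
Definition F1b := r3b - x3 * E1b.
Definition r4a := - ((y4 + y2) / (x4 - x2) * p * db22).
Definition r4b := dl4 - dx4 * c2 - (y4 + y1) / (x4 - x1) * q * db21.
Definition r1a := (l1 - d01 - x1 * c1) * da11 - (y1 + y2) / (x1 - x2) * p * q * db22.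
Definition r1b := q * dl1 - q * c2 * dx1.
Definition E2a := (r1a / q - r4a) / (x1 - x4).
Definition E2b := (r1b / q - r4b) / (x1 - x4).
Definition F2a := r4a - x4 * E2a.
Definition F2b := r4b - x4 * E2b.

Lemma eqsD : WL P *m mx2 ((d01, F1a) : dual F) (0, F1b) (0, F2a) (d02, F2b)
          + WR P *m mx2 ((c1, E1a) : dual F) (0, E1b) (0, E2a) (c2, E2b) = RHSmx P.
Proof.
apply: genE; rewrite ?e1 ?e2 ?e3 ?e4 ?e5 ?e6 ?e7 ?e8 ?e9 ?e10 ?e11 ?e12 ?e13 ?e14 ?e15 ?e16 ?e17 ?e18 ?e19 ?e20 ?e21 ?e22.
all: rewrite ?dinvB //.
all: rewrite ?(dpD, dpB, dpN, dpM, dp0); simpl.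
all: apply: pair_congr.
all: unfold F1a, F1b, F2a, F2b, E1a, E1b, E2a, E2b, r1a, r1b, r2a, r2b, r3a, r3b, r4a, r4b, d01, d02, c1, c2.
all: field; by rewrite !subr_eq0 ?hp ?hq ?n12 ?n13 ?n14 ?n23 ?n24 ?n34 ?n21 ?n31 ?n41 ?n32 ?n42 ?n43.
Qed.

Definition Pr : phase F := Phase x1 x2 x3 x4 y1 y2 y3 y4 l1 l2 l3 l4 0 q p 0 0 0 0 0 0 0.

Lemma mapW : map_mx (@dre F) (Wmx P) = Wmx Pr.
Proof.
rewrite !Wmx_split map_row_mx; congr row_mx; apply/matrixP => i j;
elim/ord4P: i; elim/ord2P: j; rewrite /WL /WR;
unfold aa, bb, kk, alpha, beta, v2; do 3 (rewrite ?big_ord1 ?mxE ?sum2 //=).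
all: rewrite ?e1 ?e2 ?e3 ?e4 ?e13 ?e14 ?e15 ?e16 //.
Qed.

Lemma unitD : Wmx P \in unitmx.
Proof.
rewrite unitmxE dunitE.
have -> : (\det (Wmx P)).1 = \det (map_mx (@dre F) (Wmx P)) by rewrite det_map_mx.
rewrite mapW -unitfE -unitmxE; apply: unitR => //.
Qed.

Lemma A01D : A0 P = (mx2 ((d01, F1a) : dual F) (0, F1b) (0, F2a) (d02, F2b))^T /\
              A1 P = (mx2 ((c1, E1a) : dual F) (0, E1b) (0, E2a) (c2, E2b))^T.
Proof. exact: (genY unitD eqsD). Qed.

Lemma HamD (p2 : F) : (Ham ((p2, 0) : dual F) P).2 = - (2%:R * (d01 * E1a + F1a * c1 + d02 * E2b + F2b * c2)).
Proof.
case: A01D => HA0 HA1.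
rewrite (HamF _ HA0 HA1) /bk00 /bk01 /bk10 /bk11 /tr2 !expr1 !expr0 /=.
rewrite ?dX1 ?dX2 ?e1 ?e2 ?e3 ?e4 ?e13 ?e14 ?e15 ?e16 ?e17 ?e18 ?e19 ?e20 ?e21 ?e22 /=.
rewrite ?dn1 ?dn2.
ring.
Qed.

End D.

Definition dQ (F : fieldType) (xa xb la lb dxa dxb dla dlb : F) : F :=
  (2%:R * (dla - dlb) * (xb * la - xa * lb)
            + 2%:R * (la - lb) * (dxb * la + xb * dla - dxa * lb - xa * dlb)) / (xa - xb) ^+ 2
  - 2%:R * (la - lb) * (xb * la - xa * lb) * (2%:R * (xa - xb) * (dxa - dxb)) / ((xa - xb) ^+ 2) ^+ 2.

Lemma HredD (F : fieldType) (P : phase (dual F)) (x1 x2 x3 x4 l1 l2 l3 l4 dx1 dx2 dx3 dx4 dl1 dl2 dl3 dl4 : F) :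
  a1 P = (x1, dx1) -> a2 P = (x2, dx2) -> a3 P = (x3, dx3) -> a4 P = (x4, dx4) ->
  k1 P = (l1, dl1) -> k2 P = (l2, dl2) -> k3 P = (l3, dl3) -> k4 P = (l4, dl4) ->
  x1 != x4 -> x2 != x3 ->
  (Hred P).2 = dQ x1 x4 l1 l4 dx1 dx4 dl1 dl4 + dQ x2 x3 l2 l3 dx2 dx3 dl2 dl3.
Proof.
move=> e1 e2 e3 e4 e5 e6 e7 e8 n14 n23.
have m14 : (x1 - x4) * (x1 - x4) != 0 by rewrite mulf_neq0 // subr_eq0.
have m23 : (x2 - x3) * (x2 - x3) != 0 by rewrite mulf_neq0 // subr_eq0.
rewrite /Hred e1 e2 e3 e4 e5 e6 e7 e8 !expr2 dpn !(dpB, dpM) !dpVs //.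
rewrite !(dpD, dpB, dpM, dpN) /= /dQ.
field.
by rewrite !subr_eq0 n14 n23.
Qed.

Theorem proposition1 (F : numClosedFieldType) (p2 p3 p4 p5 : F) (v : phase F) :
  b1 v ^+ 2 = (Pcurve p2 p3 p4 p5).[a1 v] -> b2 v ^+ 2 = (Pcurve p2 p3 p4 p5).[a2 v] ->
  b3 v ^+ 2 = (Pcurve p2 p3 p4 p5).[a3 v] -> b4 v ^+ 2 = (Pcurve p2 p3 p4 p5).[a4 v] ->
  b1 v != 0 -> b2 v != 0 -> b3 v != 0 -> b4 v != 0 ->
  a1 v != a2 v -> a1 v != a3 v -> a1 v != a4 v ->
  a2 v != a3 v -> a2 v != a4 v -> a3 v != a4 v ->
  al12 v != 0 -> al21 v != 0 ->
  al11 v = 0 -> al22 v = 0 ->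
  be11 v = 0 -> be21 v = 0 -> be12 v = 0 -> be22 v = 0 -> be23 v = 0 -> be14 v = 0 ->
  let dH x := dHam p2 p3 p4 p5 x v in
  let dHr x := dHred p2 p3 p4 p5 x v in
  let adot1 := - (2%:R * (a1 v * k4 v + a4 v * (k4 v - 2%:R * k1 v))) / (a1 v - a4 v) ^+ 2 in
  let adot4 := - (2%:R * (a4 v * k1 v + a1 v * (k1 v - 2%:R * k4 v))) / (a1 v - a4 v) ^+ 2 in
  let adot2 := - (2%:R * (a2 v * k3 v + a3 v * (k3 v - 2%:R * k2 v))) / (a2 v - a3 v) ^+ 2 in
  let adot3 := - (2%:R * (a3 v * k2 v + a2 v * (k2 v - 2%:R * k3 v))) / (a2 v - a3 v) ^+ 2 in
  (dH vbe11 = 0 /\ dH vbe22 = 0 /\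
   dH val11 = 0 /\ dH val21 = 0 /\ dH val12 = 0 /\ dH val22 = 0) /\
  Ham p2 v = Hred v /\
  (dH vk1 = adot1 /\ dH vk4 = adot4 /\
   - dH va1 = (k1 v - k4 v) / (a1 v - a4 v) * adot1 /\
   - dH va4 = (k1 v - k4 v) / (a1 v - a4 v) * adot4) /\
  (dH vk2 = adot2 /\ dH vk3 = adot3 /\
   - dH va2 = (k2 v - k3 v) / (a2 v - a3 v) * adot2 /\
   - dH va3 = (k2 v - k3 v) / (a2 v - a3 v) * adot3) /\
  (dH vbe12 = al12 v * (b2 v + b3 v) / (a2 v - a3 v) * adot3 /\
   dH vbe21 = al21 v * (b1 v + b4 v) / (a1 v - a4 v) * adot4) /\
  (dHr vk1 = adot1 /\ dHr vk2 = adot2 /\ dHr vk3 = adot3 /\ dHr vk4 = adot4 /\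
   - dHr va1 = (k1 v - k4 v) / (a1 v - a4 v) * adot1 /\
   - dHr va2 = (k2 v - k3 v) / (a2 v - a3 v) * adot2 /\
   - dHr va3 = (k2 v - k3 v) / (a2 v - a3 v) * adot3 /\
   - dHr va4 = (k1 v - k4 v) / (a1 v - a4 v) * adot4).
Proof.
move=> _ _ _ _ _ _ _ _ n12 n13 n14 n23 n24 n34 hp hq h11 h22 z1 z2 z3 z4 z5 z6.
move=> dH dHr adot1 adot4 adot2 adot3.
have h2 : (2%:R : F) != 0 by rewrite pnatr_eq0.
have key : forall dv : phase F, be23 dv = 0 -> be14 dv = 0 ->
  (Ham ((p2, 0) : dual F) (dlift v dv)).2 =
  - (2%:R * (d01 (a2 v) (a3 v) (k2 v) (k3 v)
              * E1a (a2 v) (a3 v) (b2 v) (b3 v) (k2 v) (k3 v) (al12 v) (a2 dv) (a3 dv) (k2 dv) (k3 dv) (be12 dv)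
            + F1a (a2 v) (a3 v) (b2 v) (b3 v) (k2 v) (k3 v) (al12 v) (a2 dv) (a3 dv) (k2 dv) (k3 dv) (be12 dv)
              * c1 (a2 v) (a3 v) (k2 v) (k3 v)
            + d02 (a1 v) (a4 v) (k1 v) (k4 v)
              * E2b (a1 v) (a4 v) (b1 v) (b4 v) (k1 v) (k4 v) (al21 v) (a1 dv) (a4 dv) (k1 dv) (k4 dv) (be21 dv)
            + F2b (a1 v) (a4 v) (b1 v) (b4 v) (k1 v) (k4 v) (al21 v) (a1 dv) (a4 dv) (k1 dv) (k4 dv) (be21 dv)
              * c2 (a1 v) (a4 v) (k1 v) (k4 v))).
{ move=> dv d23 d14.
  apply: (HamD (x1 := a1 v) (x2 := a2 v) (x3 := a3 v) (x4 := a4 v)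
     (y1 := b1 v) (y2 := b2 v) (y3 := b3 v) (y4 := b4 v)
     (l1 := k1 v) (l2 := k2 v) (l3 := k3 v) (l4 := k4 v) (p := al12 v) (q := al21 v)
     (dx1 := a1 dv) (dx2 := a2 dv) (dx3 := a3 dv) (dx4 := a4 dv)
     (dy1 := b1 dv) (dy2 := b2 dv) (dy3 := b3 dv) (dy4 := b4 dv)
     (dl1 := k1 dv) (dl2 := k2 dv) (dl3 := k3 dv) (dl4 := k4 dv)
     (da11 := al11 dv) (da21 := al21 dv) (da12 := al12 dv) (da22 := al22 dv)
     (db11 := be11 dv) (db21 := be21 dv) (db12 := be12 dv) (db22 := be22 dv)) => //=;
  by rewrite ?h11 ?h22 ?z1 ?z2 ?z3 ?z4 ?z5 ?z6 ?d23 ?d14. }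
have keyr : forall dv : phase F,
  (Hred (dlift v dv)).2 = dQ (a1 v) (a4 v) (k1 v) (k4 v) (a1 dv) (a4 dv) (k1 dv) (k4 dv)
                        + dQ (a2 v) (a3 v) (k2 v) (k3 v) (a2 dv) (a3 dv) (k2 dv) (k3 dv).
{ by move=> dv; apply: HredD. }
have HR : Ham p2 v = Hred v by apply: HamReal.
have m14 : a1 v - a4 v != 0 by rewrite subr_eq0.
have m23 : a2 v - a3 v != 0 by rewrite subr_eq0.
have kH : forall x, dH x = - (2%:R * (d01 (a2 v) (a3 v) (k2 v) (k3 v)
              * E1a (a2 v) (a3 v) (b2 v) (b3 v) (k2 v) (k3 v) (al12 v) (a2 (dir p2 p3 p4 p5 x v)) (a3 (dir p2 p3 p4 p5 x v)) (k2 (dir p2 p3 p4 p5 x v)) (k3 (dir p2 p3 p4 p5 x v)) (be12 (dir p2 p3 p4 p5 x v))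
            + F1a (a2 v) (a3 v) (b2 v) (b3 v) (k2 v) (k3 v) (al12 v) (a2 (dir p2 p3 p4 p5 x v)) (a3 (dir p2 p3 p4 p5 x v)) (k2 (dir p2 p3 p4 p5 x v)) (k3 (dir p2 p3 p4 p5 x v)) (be12 (dir p2 p3 p4 p5 x v))
              * c1 (a2 v) (a3 v) (k2 v) (k3 v)
            + d02 (a1 v) (a4 v) (k1 v) (k4 v)
              * E2b (a1 v) (a4 v) (b1 v) (b4 v) (k1 v) (k4 v) (al21 v) (a1 (dir p2 p3 p4 p5 x v)) (a4 (dir p2 p3 p4 p5 x v)) (k1 (dir p2 p3 p4 p5 x v)) (k4 (dir p2 p3 p4 p5 x v)) (be21 (dir p2 p3 p4 p5 x v))
            + F2b (a1 v) (a4 v) (b1 v) (b4 v) (k1 v) (k4 v) (al21 v) (a1 (dir p2 p3 p4 p5 x v)) (a4 (dir p2 p3 p4 p5 x v)) (k1 (dir p2 p3 p4 p5 x v)) (k4 (dir p2 p3 p4 p5 x v)) (be21 (dir p2 p3 p4 p5 x v))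
              * c2 (a1 v) (a4 v) (k1 v) (k4 v))).
{ move=> x; exact: (key (dir p2 p3 p4 p5 x v) erefl erefl). }
have kHr : forall x, dHr x = dQ (a1 v) (a4 v) (k1 v) (k4 v) (a1 (dir p2 p3 p4 p5 x v)) (a4 (dir p2 p3 p4 p5 x v)) (k1 (dir p2 p3 p4 p5 x v)) (k4 (dir p2 p3 p4 p5 x v))
                        + dQ (a2 v) (a3 v) (k2 v) (k3 v) (a2 (dir p2 p3 p4 p5 x v)) (a3 (dir p2 p3 p4 p5 x v)) (k2 (dir p2 p3 p4 p5 x v)) (k3 (dir p2 p3 p4 p5 x v)).
{ move=> x; exact: (keyr (dir p2 p3 p4 p5 x v)). }
rewrite !kH. rewrite !kHr. rewrite /adot1 /adot2 /adot3 /adot4 /=.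
unfold F1a, F2b, E1a, E2b, r1a, r1b, r2a, r2b, r3a, r3b, r4a, r4b, d01, d02, c1, c2, dQ.
have n21 : a2 v != a1 v by rewrite eq_sym.
have n31 : a3 v != a1 v by rewrite eq_sym.
have n41 : a4 v != a1 v by rewrite eq_sym.
have n32 : a3 v != a2 v by rewrite eq_sym.
have n42 : a4 v != a2 v by rewrite eq_sym.
have n43 : a4 v != a3 v by rewrite eq_sym.
split; [|split; [exact: HR|]].
all: repeat split.
all: try by field; rewrite ?hp ?hq ?h2 !subr_eq0 ?n12 ?n13 ?n14 ?n23 ?n24 ?n34 ?n21 ?n31 ?n41 ?n32 ?n42 ?n43.
Qed.
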